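(* Let $p,q\in[0,1]$ be real numbers with $p<q$, let $I$ be a closed interval with $I\subseteq(0,1)$, let $\mathscr S$ be a countable set of selection processes with $\mathscr S\supseteq\mathscr S^{p,q}_{\mathscr F_{\mathrm{ML}}}$, and let $\varpi\in\Omega$ be $\mathscr S$-random for $I$. Then for every $R\in\{\mathrm{ML},\mathrm{wML},\mathrm C,\mathrm S\}$, a path $\omega\in\Omega$ is $R$-random for $\varphi^\varpi_{p,q}$ if and only if it is $R$-random for $[p,q]$.
   Context: Notation: $\mathbb N=\{1,2,\dots\}$, $\mathbb N_0=\mathbb N\cup\{0\}$. $\Omega=\{0,1\}^{\mathbb N}$ is the set of paths $\omega=(\omega_1,\omega_2,\dots)$; $\omega_{1:n}=(\omega_1,\dots,\omega_n)$, $\omega_{1:0}=\square$. $\mathbb S=\bigcup_{n\in\mathbb N_0}\{0,1\}^n$ is the set of situations, $|s|$ the length, $sx$ concatenation. For $r\in[0,1]$, $f:\{0,1\}\to\mathbb R$: $E_r(f)=rf(1)+(1-r)f(0)$; for a closed interval $I\subseteq[0,1]$, $\overline E_I(f)=\max_{r\in I}E_r(f)$. A forecasting system is a map $\varphi$ from $\mathbb S$ to closed subintervals of $[0,1]$, $\underline\varphi(s)=\min\varphi(s)$, $\overline\varphi(s)=\max\varphi(s)$; being random for an interval $I$ means being random for the constant forecasting system with value $I$. A real process is $F:\mathbb S\to\mathbb R$; $\Delta F(s)$ is $x\mapsto F(sx)-F(s)$. $M$ is a supermartingale for $\varphi$ if $\overline E_{\varphi(s)}(\Delta M(s))\le0$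 for all $s$. A test process is a non-negative real process with $F(\square)=1$; a test supermartingale for $\varphi$ is a test process that is a supermartingale for $\varphi$. A multiplier process $D$ assigns to each $s$ a function $D(s):\{0,1\}\to[0,\infty)$ and generates the test process $F(\square)=1$, $F(sx)=F(s)D(s)(x)$. Computability: maps from countable effectively encoded domains to $\mathbb N_0$ or $\mathbb Q$ are recursive if Turing-computable; a real map $r$ on a domain $\mathscr D$ is lower semicomputable if $r(d)=\lim_nq(d,n)$ for a recursive rational $q$ non-decreasing in $n$, computable if $|r(d)-q(d,n)|<2^{-n}$ for a recursive rational $q$. $\mathscr F_{\mathrm{ML}}$: lower semicomputable test processes; $\mathscr F_{\mathrm{wML}}$: test processes generated by lower semicomputable multiplier processes; $\mathscr F_{\mathrm C}=\mathscr F_{\mathrm S}$: positive rational-valued recursive test processes. $\overline{\mathbb T}_R(\varphi)$: elements of $\mathscr F_R$ that are test supermartingales for $\varphi$. For $R\in\{\mathrm{ML},\mathrm{wML},\mathrm C\}$, $\omega$ is $R$-random for $\varphi$ if no $T\in\overline{\mathbb T}_R(\varphi)$ has $\limsup_nT(\omega_{1:n})=\infty$. A real growth function is a computable, non-decreasing, unbounded $\tau:\mathbb N_0\to[0,\infty)$; $\omega$ is S-random for $\varphi$ if there are no $T\in\overline{\mathbb T}_{\mathrm S}(\varphi)$ and real growth function $\tau$ with $\limsup_n[T(\omega_{1:n})-\tau(n)]\ge0$. Selection: a selection process is $S:\mathbb S\to\{0,1\}$, temporal if $S(s)$ depends only on $|s|$ (written $S(n)$). For countable $\mathscr S$, $\omega$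 is $\mathscr S$-random for $\varphi$ if for every $S\in\mathscr S$ with $\lim_n\sum_{k=0}^{n-1}S(\omega_{1:k})=\infty$: $\liminf_n\frac{\sum_{k=0}^{n-1}S(\omega_{1:k})[\omega_{k+1}-\underline\varphi(\omega_{1:k})]}{\sum_{k=0}^{n-1}S(\omega_{1:k})}\ge0$ and $\limsup_n\frac{\sum_{k=0}^{n-1}S(\omega_{1:k})[\omega_{k+1}-\overline\varphi(\omega_{1:k})]}{\sum_{k=0}^{n-1}S(\omega_{1:k})}\le0$. For a real process $F$ and $r\in[0,1]$, $S^r_F$ is the temporal selection process with $S^r_F(n)=1$ if $E_r(\Delta F(s))>0$ for some $s$ with $|s|=n$, and $0$ otherwise; $\mathscr S^{p,q}_{\mathscr F}=\{S^r_F:F\in\mathscr F,\ r\in\{p,q\}\}$. For $\varpi\in\Omega$, $\varphi^\varpi_{p,q}$ is the precise forecasting system with $\varphi^\varpi_{p,q}(s)=p$ if $\varpi_{|s|+1}=0$ and $=q$ if $\varpi_{|s|+1}=1$. *)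

(* Defs.v *)
From Stdlib Require Import Reals Lra Lia List Arith.
Open Scope R_scope.

(* A path omega = (omega_1, omega_2, ...) is  w : nat -> bool  with
   omega_{k+1} = w k.  A situation is a finite list of bits (s_1,...,s_n);
   concatenation sx is  s ++ [x].                                        *)
Definition path := nat -> bool.
Definition sit := list bool.

Definition prefix (w : path) (n : nat) : sit := map w (seq 0 n).

Definition b2R (b : bool) : R := if b then 1 else 0.

(* A forecasting system maps a situation to the closed interval
   [fst (phi s), snd (phi s)]. *)
Definition fsys := sit -> R * R.

Definition const_fsys (a b : R) : fsys := fun _ => (a, b).

Definition phi_pq (varpi : path) (p q : R) : fsys :=
  fun s => if varpi (length s) then (q, q) else (p, p).

Definition in_fs (phi : fsys) (s : sit) (r : R) : Prop :=
  fst (phi s) <= r <= snd (phi s).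

Definition Er (r : R) (f : bool -> R) : R := r * f true + (1 - r) * f false.

Definition rproc := sit -> R.

Definition DeltaF (F : rproc) (s : sit) : bool -> R :=
  fun x => F (s ++ x :: nil) - F s.

(* upper expectation  max_{r in phi s} E_r(Delta M(s)) <= 0 *)
Definition supermart (phi : fsys) (M : rproc) : Prop :=
  forall s r, in_fs phi s r -> Er r (DeltaF M s) <= 0.

Definition test_proc (F : rproc) : Prop :=
  (forall s, 0 <= F s) /\ F nil = 1.

Definition mproc := sit -> bool -> R.

Fixpoint gen_aux (D : mproc) (s : sit) (n : nat) : R :=
  match n with
  | O => 1
  | S k => gen_aux D s k * D (firstn k s) (nth k s false)
  end.
(* F(square) = 1, F(sx) = F(s) D(s)(x) *)
Definition gen (D : mproc) : rproc := fun s => gen_aux D s (length s).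

(* Computability: mu-recursive (= Turing computable) partial functions *)
Inductive code : Type :=
| CZero : code
| CSucc : code
| CProj : nat -> code
| CComp : code -> list code -> code
| CPrec : code -> code -> code
| CMu   : code -> code.

Inductive eval : code -> list nat -> nat -> Prop :=
| eZero xs : eval CZero xs 0
| eSucc x xs : eval CSucc (x :: xs) (S x)
| eProj i xs v : nth_error xs i = Some v -> eval (CProj i) xs v
| eComp f gs xs ys v : evals gs xs ys -> eval f ys v -> eval (CComp f gs) xs v
| ePrec0 f g xs v : eval f xs v -> eval (CPrec f g) (0%nat :: xs) v
| ePrecS f g n xs u v :
    eval (CPrec f g) (n :: xs) u -> eval g (n :: u :: xs) v ->
    eval (CPrec f g) (S n :: xs) v
| eMu f xs n :
    eval f (n :: xs) 0 ->
    (forall m, (m < n)%nat -> exists k, eval f (m :: xs) (S k)) ->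
    eval (CMu f) xs n
with evals : list code -> list nat -> list nat -> Prop :=
| esNil xs : evals nil xs nil
| esCons g gs xs y ys : eval g xs y -> evals gs xs ys -> evals (g :: gs) xs (y :: ys).

(* effective encoding of situations as natural numbers (binary with a
   leading 1): a bijection between sit and positive naturals *)
Definition enc (s : sit) : nat :=
  fold_left (fun (acc : nat) (b : bool) => (2 * acc + (if b then 1 else 0))%nat) s 1%nat.

(* rational outputs: a triple of codes computing sign bit, numerator and
   denominator-minus-one; the rational value is (+/-) num / (den+1) *)
Definition qcode := (code * code * code)%type.

Definition qval (c : qcode) (args : list nat) (v : R) : Prop :=
  let cs := fst (fst c) in let cn := snd (fst c) in let cd := snd c in
  exists sg nm dn, eval cs args sg /\ eval cn args nm /\ eval cd args dn /\
    v = (if Nat.eqb sg 0 then 1 else -1) * INR nm / INR (S dn).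

Definition lsc {D : Type} (args : D -> nat -> list nat) (r : D -> R) : Prop :=
  exists (c : qcode) (q : D -> nat -> R),
    (forall d n, qval c (args d n) (q d n)) /\
    (forall d n, q d n <= q d (S n)) /\
    (forall d, Un_cv (q d) (r d)).

Definition computable_real {D : Type} (args : D -> nat -> list nat) (r : D -> R) : Prop :=
  exists (c : qcode) (q : D -> nat -> R),
    (forall d n, qval c (args d n) (q d n)) /\
    (forall d n, Rabs (r d - q d n) < / 2 ^ n).

Definition F_ML (F : rproc) : Prop :=
  test_proc F /\ lsc (fun s n => enc s :: n :: nil) F.

Definition F_wML (F : rproc) : Prop :=
  test_proc F /\
  exists D : mproc,
    (forall s x, 0 <= D s x) /\
    lsc (fun (sx : sit * bool) n =>
           enc (fst sx) :: (if snd sx then 1 else 0)%nat :: n :: nil)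
        (fun sx => D (fst sx) (snd sx)) /\
    (forall s, F s = gen D s).

(* F_C = F_S: positive rational-valued recursive test processes *)
Definition F_C (F : rproc) : Prop :=
  test_proc F /\ (forall s, 0 < F s) /\
  exists c : qcode, forall s, qval c (enc s :: nil) (F s).

Definition test_supermart (phi : fsys) (F : rproc) : Prop :=
  test_proc F /\ supermart phi F.

Definition limsup_inf (a : nat -> R) : Prop :=
  forall M N, exists n, (N <= n)%nat /\ a n > M.

Definition limsup_ge0 (a : nat -> R) : Prop :=
  forall eps N, eps > 0 -> exists n, (N <= n)%nat /\ a n > - eps.

Definition growth (tau : nat -> R) : Prop :=
  (forall n, 0 <= tau n) /\
  computable_real (fun n m => n :: m :: nil) tau /\
  (forall n, tau n <= tau (S n)) /\
  (forall M, exists n, tau n > M).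

Inductive rnotion := RML | RwML | RC | RS.

Definition ML_like_random (cls : rproc -> Prop) (phi : fsys) (w : path) : Prop :=
  ~ exists T, cls T /\ test_supermart phi T /\ limsup_inf (fun n => T (prefix w n)).

Definition random (Rn : rnotion) (phi : fsys) (w : path) : Prop :=
  match Rn with
  | RML => ML_like_random F_ML phi w
  | RwML => ML_like_random F_wML phi w
  | RC => ML_like_random F_C phi w
  | RS => ~ exists T tau, F_C T /\ test_supermart phi T /\ growth tau /\
            limsup_ge0 (fun n => T (prefix w n) - tau n)
  end.

Definition selproc := sit -> bool.

Fixpoint selcount (sel : selproc) (w : path) (n : nat) : R :=
  match n with
  | O => 0
  | S k => selcount sel w k + (if sel (prefix w k) then 1 else 0)
  end.

Fixpoint selsum (sel : selproc) (f : sit -> R) (w : path) (n : nat) : R :=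
  match n with
  | O => 0
  | S k => selsum sel f w k +
           (if sel (prefix w k) then b2R (w k) - f (prefix w k) else 0)
  end.

Definition countable_set {A : Type} (P : A -> Prop) : Prop :=
  exists f : A -> nat, forall x y, P x -> P y -> f x = f y -> x = y.

Definition sel_random (Ss : selproc -> Prop) (phi : fsys) (w : path) : Prop :=
  forall sel, Ss sel ->
    (forall M, exists N, forall n, (N <= n)%nat -> selcount sel w n > M) ->
    (forall eps, eps > 0 -> exists N, forall n, (N <= n)%nat ->
        selsum sel (fun s => fst (phi s)) w n / selcount sel w n > - eps) /\
    (forall eps, eps > 0 -> exists N, forall n, (N <= n)%nat ->
        selsum sel (fun s => snd (phi s)) w n / selcount sel w n < eps).

Definition is_SrF (r : R) (F : rproc) (sel : selproc) : Prop :=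
  forall s, sel s = true <->
    exists s', length s' = length s /\ Er r (DeltaF F s') > 0.

Definition contains_SpqML (p q : R) (Ss : selproc -> Prop) : Prop :=
  forall F r sel, F_ML F -> (r = p \/ r = q) -> is_SrF r F sel -> Ss sel.

(* Main.v *)
Require Import Defs.
From Stdlib Require Import Reals Lra Lia List Arith ClassicalEpsilon ZArith.
Import ListNotations.
Open Scope R_scope.

Ltac dm n := pose proof (Nat.div_mod_eq n 2); pose proof (Nat.mod_upper_bound n 2 ltac:(lia)).

Fixpoint constc (k : nat) : code :=
  match k with O => CZero | S k => CComp CSucc [constc k] end.

Lemma ev_comp1 f g xs y v : eval g xs y -> eval f [y] v -> eval (CComp f [g]) xs v.
Proof. intros. econstructor; [repeat econstructor; eauto|eauto]. Qed.
Lemma ev_comp2 f g1 g2 xs y1 y2 v : eval g1 xs y1 -> eval g2 xs y2 -> eval f [y1;y2] v ->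
  eval (CComp f [g1;g2]) xs v.
Proof. intros. econstructor; [repeat econstructor; eauto|eauto]. Qed.
Lemma ev_comp3 f g1 g2 g3 xs y1 y2 y3 v : eval g1 xs y1 -> eval g2 xs y2 -> eval g3 xs y3 ->
  eval f [y1;y2;y3] v -> eval (CComp f [g1;g2;g3]) xs v.
Proof. intros. econstructor; [repeat econstructor; eauto|eauto]. Qed.
Lemma ev_comp4 f g1 g2 g3 g4 xs y1 y2 y3 y4 v : eval g1 xs y1 -> eval g2 xs y2 -> eval g3 xs y3 ->
  eval g4 xs y4 -> eval f [y1;y2;y3;y4] v -> eval (CComp f [g1;g2;g3;g4]) xs v.
Proof. intros. econstructor; [repeat econstructor; eauto|eauto]. Qed.
Lemma ev_proj i xs v : nth_error xs i = Some v -> eval (CProj i) xs v.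
Proof. intros; constructor; auto. Qed.

Lemma ev_const k xs : eval (constc k) xs k.
Proof. induction k; simpl. constructor. eapply ev_comp1; eauto. constructor. Qed.

Fixpoint primrec (a : nat) (h : nat -> nat -> nat) (n : nat) : nat :=
  match n with O => a | S m => h m (primrec a h m) end.

Lemma ev_prec f g xs a h : eval f xs a -> (forall n u, eval g (n :: u :: xs) (h n u)) ->
  forall n, eval (CPrec f g) (n :: xs) (primrec a h n).
Proof. intros Hf Hg n; induction n; simpl. constructor; auto. econstructor; eauto. Qed.

Definition addc := CPrec (CProj 0) (CComp CSucc [CProj 1]).
Lemma ev_add x y xs : eval addc (x :: y :: xs) (x + y)%nat.
Proof.
  replace (x + y)%nat with (primrec y (fun _ u => S u) x).
  - apply ev_prec. apply ev_proj; reflexivity.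
    intros. eapply ev_comp1. apply ev_proj; reflexivity. constructor.
  - induction x; simpl; auto.
Qed.

Definition mulc := CPrec CZero (CComp addc [CProj 2; CProj 1]).
Lemma ev_mul x y xs : eval mulc (x :: y :: xs) (x * y)%nat.
Proof.
  replace (x * y)%nat with (primrec 0 (fun _ u => y + u)%nat x).
  - apply ev_prec. constructor.
    intros. eapply ev_comp2; try (apply ev_proj; reflexivity). apply ev_add.
  - induction x; simpl; auto.
Qed.

Definition predc := CPrec CZero (CProj 0).
Lemma ev_pred x xs : eval predc (x :: xs) (Nat.pred x).
Proof.
  replace (Nat.pred x) with (primrec 0 (fun n _ => n) x).
  - apply ev_prec. constructor. intros; apply ev_proj; reflexivity.
  - destruct x; reflexivity.
Qed.

Definition subrc := CPrec (CProj 0) (CComp predc [CProj 1]).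
Lemma ev_subr y x xs : eval subrc (y :: x :: xs) (x - y)%nat.
Proof.
  replace (x - y)%nat with (primrec x (fun _ u => Nat.pred u) y).
  - apply ev_prec. apply ev_proj; reflexivity.
    intros. eapply ev_comp1. apply ev_proj; reflexivity. apply ev_pred.
  - induction y; simpl. lia. rewrite IHy. lia.
Qed.

Definition subc := CComp subrc [CProj 1; CProj 0].
Lemma ev_sub x y xs : eval subc (x :: y :: xs) (x - y)%nat.
Proof. eapply ev_comp2; try (apply ev_proj; reflexivity). apply ev_subr. Qed.

Definition parc := CPrec CZero (CComp subc [constc 1; CProj 1]).
Lemma ev_par x xs : eval parc (x :: xs) (x mod 2)%nat.
Proof.
  replace (x mod 2)%nat with (primrec 0 (fun _ u => 1 - u)%nat x).
  - apply ev_prec. constructor.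
    intros. eapply ev_comp2. apply ev_const. apply ev_proj; reflexivity. apply ev_sub.
  - induction x. reflexivity. cbn [primrec]. rewrite IHx. dm x; dm (S x). lia.
Qed.

Definition div2c := CPrec CZero (CComp addc [CProj 1; CComp parc [CProj 0]]).
Lemma ev_div2 x xs : eval div2c (x :: xs) (x / 2)%nat.
Proof.
  replace (x / 2)%nat with (primrec 0 (fun n u => u + n mod 2)%nat x).
  - apply ev_prec. constructor.
    intros. eapply ev_comp2. apply ev_proj; reflexivity.
    eapply ev_comp1. apply ev_proj; reflexivity. apply ev_par. apply ev_add.
  - induction x. reflexivity. cbn [primrec]. rewrite IHx. dm x; dm (S x). lia.
Qed.

Definition dpowc := CPrec (CProj 0) (CComp div2c [CProj 1]).
Lemma ev_dpow i e xs : eval dpowc (i :: e :: xs) (e / 2 ^ i)%nat.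
Proof.
  replace (e / 2 ^ i)%nat with (primrec e (fun _ u => u / 2)%nat i).
  - apply ev_prec. apply ev_proj; reflexivity.
    intros. eapply ev_comp1. apply ev_proj; reflexivity. apply ev_div2.
  - induction i. cbn [primrec]. rewrite Nat.pow_0_r, Nat.div_1_r; auto. cbn [primrec]. rewrite IHi.
    rewrite Nat.Div0.div_div, Nat.pow_succ_r', Nat.mul_comm; reflexivity.
Qed.

Lemma evals_projs ys xs0 :
  evals (map CProj (seq (length xs0) (length ys))) (xs0 ++ ys) ys.
Proof.
  revert xs0; induction ys as [|y ys IH]; intros xs0; simpl. constructor.
  constructor. apply ev_proj. rewrite nth_error_app2 by lia. rewrite Nat.sub_diag; reflexivity.
  specialize (IH (xs0 ++ [y])). rewrite <- app_assoc in IH. simpl in IH.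
  rewrite length_app in IH. simpl in IH. rewrite Nat.add_1_r in IH. exact IH.
Qed.

Definition itec (m : nat) (t f g : code) : code :=
  CComp (CPrec f (CComp g (map CProj (seq 2 m)))) (t :: map CProj (seq 0 m)).

Lemma ev_ite0 t f g xs v : eval t xs 0 -> eval f xs v -> eval (itec (length xs) t f g) xs v.
Proof.
  intros. econstructor. constructor. eauto. apply (evals_projs xs nil).
  constructor; auto.
Qed.

Lemma ev_iteS t f g xs u v k : eval t xs (S k) -> eval f xs u -> eval g xs v ->
  eval (itec (length xs) t f g) xs v.
Proof.
  intros. econstructor. constructor. eauto. apply (evals_projs xs nil).
  assert (Hg : forall n w, eval (CComp g (map CProj (seq 2 (length xs)))) (n :: w :: xs) v).
  { intros. econstructor. apply (evals_projs xs [n; w]). auto. }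
  assert (forall k, exists w, eval (CPrec f (CComp g (map CProj (seq 2 (length xs))))) (k :: xs) w).
  { induction k0. eexists; constructor; eauto. destruct IHk0 as [w Hw]. eexists; econstructor; eauto. }
  destruct (H2 k) as [w Hw]. econstructor; eauto.
Qed.

Definition qmap (F : code -> code) (c : qcode) : qcode :=
  (F (fst (fst c)), F (snd (fst c)), F (snd c)).

Definition qscale (k : nat) (c : qcode) : qcode :=
  (fst (fst c), snd (fst c),
   CComp addc [CComp mulc [constc k; CComp CSucc [snd c]]; snd c]).

Definition sgnR (sg : nat) : R := if Nat.eqb sg 0 then 1 else -1.

Lemma scale_eq sg nm dn k : (if Nat.eqb sg 0 then 1 else -1) * INR nm / INR (S dn) / INR (S k) =
  (if Nat.eqb sg 0 then 1 else -1) * INR nm / INR (S (k * S dn + dn)).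
Proof.
  replace (S (k * S dn + dn)) with (S k * S dn)%nat by lia.
  rewrite mult_INR. field. split; apply not_0_INR; lia.
Qed.

Lemma qval_scale k c xs v : qval c xs v -> qval (qscale k c) xs (v / INR (S k)).
Proof.
  intros (sg & nm & dn & H1 & H2 & H3 & H4). unfold qval, qscale; simpl.
  exists sg, nm, (k * S dn + dn)%nat. split; [auto|split;[auto|split]].
  eapply ev_comp2; [|eauto|apply ev_add]. eapply ev_comp2. apply ev_const.
  eapply ev_comp1; eauto. constructor. apply ev_mul.
  subst v. exact (scale_eq sg nm dn k).
Qed.

Definition qone : qcode := (CZero, constc 1, CZero).
Lemma qval_one xs : qval qone xs 1.
Proof. exists 0%nat, 1%nat, 0%nat. repeat split; try constructor; try apply ev_const. simpl. field. Qed.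

Definition qite (m : nat) (t : code) (c1 c2 : qcode) : qcode :=
  (itec m t (fst (fst c1)) (fst (fst c2)), itec m t (snd (fst c1)) (snd (fst c2)),
   itec m t (snd c1) (snd c2)).

Lemma qval_ite0 t c1 c2 xs v : eval t xs 0 -> qval c1 xs v -> qval (qite (length xs) t c1 c2) xs v.
Proof.
  intros Ht (sg & nm & dn & H1 & H2 & H3 & H4). exists sg, nm, dn; simpl.
  repeat split; auto; apply ev_ite0; auto.
Qed.

Lemma qval_iteS t c1 c2 xs u v k : eval t xs (S k) -> qval c1 xs u -> qval c2 xs v ->
  qval (qite (length xs) t c1 c2) xs v.
Proof.
  intros Ht (sg & nm & dn & H1 & H2 & H3 & H4) (sg' & nm' & dn' & H1' & H2' & H3' & H4').
  exists sg', nm', dn'; simpl. repeat split; auto; eapply ev_iteS; eauto.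
Qed.

Lemma qval_proj c x y v : qval c [x] v -> qval (qmap (fun c => CComp c [CProj 0]) c) [x; y] v.
Proof.
  intros (sg & nm & dn & H1 & H2 & H3 & H4). exists sg, nm, dn; simpl.
  repeat split; auto; (eapply ev_comp1; [apply ev_proj; reflexivity|]; auto).
Qed.

Definition bitn (b : bool) : nat := if b then 1%nat else 0%nat.

Lemma enc_snoc s b : enc (s ++ [b]) = (2 * enc s + bitn b)%nat.
Proof. unfold enc. rewrite fold_left_app. reflexivity. Qed.

Lemma enc_bounds s : (2 ^ length s <= enc s < 2 ^ S (length s))%nat.
Proof.
  induction s as [|b s IH] using rev_ind. cbn. lia.
  rewrite enc_snoc, length_app. simpl length. rewrite Nat.add_1_r.
  rewrite !Nat.pow_succ_r'. destruct b; simpl bitn; rewrite Nat.pow_succ_r' in IH; lia.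
Qed.

Lemma enc_app_div s t : (enc (s ++ t) / 2 ^ length t)%nat = enc s.
Proof.
  induction t as [|b t IH] using rev_ind. rewrite app_nil_r. simpl. apply Nat.div_1_r.
  rewrite app_assoc, enc_snoc, length_app. simpl length. rewrite Nat.add_1_r, Nat.pow_succ_r'.
  rewrite <- Nat.Div0.div_div.
  replace ((2 * enc (s ++ t) + bitn b) / 2)%nat with (enc (s++t)). exact IH.
  destruct b; simpl bitn.
  - rewrite Nat.mul_comm. rewrite Nat.div_add_l by lia. simpl. lia.
  - rewrite Nat.mul_comm, Nat.add_0_r. rewrite Nat.div_mul; lia.
Qed.

Lemma firstn_S_snoc (s : sit) m : (m < length s)%nat ->
  firstn (S m) s = firstn m s ++ [nth m s false].
Proof.
  revert m; induction s as [|x s IH]; intros m Hm; simpl in Hm. lia.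
  destruct m. reflexivity. change (firstn (S (S m)) (x :: s)) with (x :: firstn (S m) s). rewrite IH by lia. reflexivity.
Qed.

Lemma enc_div_firstn s m : (m <= length s)%nat ->
  (enc s / 2 ^ (length s - m))%nat = enc (firstn m s).
Proof.
  intros H. rewrite <- (firstn_skipn m s) at 1.
  replace (length s - m)%nat with (length (skipn m s)) by (rewrite length_skipn; lia).
  apply enc_app_div.
Qed.

Lemma enc_mod_bit s m : (m < length s)%nat ->
  (enc (firstn (S m) s) mod 2)%nat = bitn (nth m s false).
Proof.
  intros H. rewrite firstn_S_snoc, enc_snoc by auto.
  destruct (nth m s false); simpl bitn.
  rewrite Nat.add_comm, Nat.mul_comm, Nat.Div0.mod_add. reflexivity.
  rewrite Nat.add_0_r, Nat.mul_comm, Nat.Div0.mod_mul. reflexivity.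
Qed.

Fixpoint prodn (f : nat -> nat) (m : nat) : nat :=
  match m with O => 1%nat | S m => (prodn f m * f m)%nat end.

Lemma prodn_ext f g m : (forall j, (j < m)%nat -> f j = g j) -> prodn f m = prodn g m.
Proof. induction m; intros H; simpl. auto. rewrite IHm, H; auto. Qed.

Lemma prodn_ones f L m : (forall j, (L <= j)%nat -> f j = 1%nat) -> (L <= m)%nat ->
  prodn f m = prodn f L.
Proof. intros H; induction 1; simpl; auto. rewrite IHle, H by lia. lia. Qed.

Lemma prodn_shift f m : prodn f (S m) = (f 0%nat * prodn (fun j => f (S j)) m)%nat.
Proof. induction m. simpl. lia. change (prodn f (S (S m))) with (prodn f (S m) * f (S m))%nat.
  rewrite IHm. simpl. lia. Qed.

Lemma prodn_rev f L : prodn (fun j => f (L - S j)%nat) L = prodn f L.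
Proof.
  induction L. reflexivity.
  rewrite prodn_shift. rewrite (prodn_ext _ (fun j => f (L - S j)%nat)) by (intros; f_equal; lia).
  rewrite IHL. simpl. replace (L - 0)%nat with L by lia. lia.
Qed.

Lemma primrec_prodn f m : primrec 1 (fun j u => u * f j)%nat m = prodn f m.
Proof. induction m; simpl; auto. Qed.

Definition dpS := CComp dpowc [CComp CSucc [CProj 0]; CProj 1].
Definition tcode := CComp subc [constc 1; CComp subc [constc 1; dpS]].
Definition factc (Fc : code) : code :=
  itec 3 tcode (constc 1)
    (CComp Fc [dpS; CComp parc [CComp dpowc [CProj 0; CProj 1]]; CProj 2]).
Definition loopc (Fc : code) : code :=
  CPrec (constc 1) (CComp mulc [CProj 1; CComp (factc Fc) [CProj 0; CProj 2; CProj 3]]).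
Definition topc (Fc : code) : code := CComp (loopc Fc) [CProj 0; CProj 0; CProj 1].

Lemma ev_dpS i e n : eval dpS [i; e; n] (e / 2 ^ S i)%nat.
Proof. eapply ev_comp2. eapply ev_comp1. apply ev_proj; reflexivity. constructor.
  apply ev_proj; reflexivity. apply ev_dpow. Qed.

Lemma ev_tcode i e n : eval tcode [i; e; n] (1 - (1 - e / 2 ^ S i))%nat.
Proof. eapply ev_comp2. apply ev_const. eapply ev_comp2. apply ev_const. apply ev_dpS.
  apply ev_sub. apply ev_sub. Qed.

Lemma ev_top Fc s n (a : nat -> nat) :
  (forall k, (k < length s)%nat ->
     eval Fc [enc (firstn k s); bitn (nth k s false); n] (a k)) ->
  eval (topc Fc) [enc s; n] (prodn a (length s)).
Proof.
  intros Ha. set (L := length s). set (e := enc s).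
  pose proof (enc_bounds s) as Hb. fold L e in Hb.
  set (fac := fun j => if (j <? L)%nat then a (L - S j)%nat else 1%nat).
  assert (Hf : forall j, eval (factc Fc) [j; e; n] (fac j)).
  { intros j. unfold fac. destruct (Nat.ltb_spec j L).
    - assert (Hd : (e / 2 ^ S j)%nat = enc (firstn (L - S j) s)).
      { pose proof (enc_div_firstn s (L - S j) ltac:(lia)) as E.
        replace (length s - (L - S j))%nat with (S j) in E by lia. exact E. }
      pose proof (enc_bounds (firstn (L - S j) s)).
      eapply (ev_iteS _ _ _ [j; e; n] 1%nat _ 0%nat).
      + replace 1%nat with (1 - (1 - e / 2 ^ S j))%nat. apply ev_tcode.
        rewrite Hd. pose proof (Nat.pow_nonzero 2 (length (firstn (L - S j) s)) ltac:(lia)). lia.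
      + apply ev_const.
      + eapply ev_comp3. apply ev_dpS. eapply ev_comp1.
        eapply ev_comp2; try (apply ev_proj; reflexivity). apply ev_dpow. apply ev_par.
        apply ev_proj; reflexivity.
        rewrite Hd.
        replace (e / 2 ^ j)%nat with (enc (firstn (S (L - S j)) s)).
        rewrite enc_mod_bit by lia. apply Ha. lia.
        pose proof (enc_div_firstn s (S (L - S j)) ltac:(lia)) as E.
        replace (length s - S (L - S j))%nat with j in E by lia. symmetry; exact E.
    - apply (ev_ite0 _ _ _ [j; e; n]). replace 0%nat with (1 - (1 - e / 2 ^ S j))%nat. apply ev_tcode.
      rewrite Nat.div_small. reflexivity.
      apply Nat.lt_le_trans with (1 := proj2 Hb). apply Nat.pow_le_mono_r; lia.
      apply ev_const. }
  unfold topc. eapply ev_comp3; try (apply ev_proj; reflexivity).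
  replace (prodn a L) with (prodn fac e).
  - unfold loopc. rewrite <- primrec_prodn. apply ev_prec. apply ev_const.
    intros. eapply ev_comp2. apply ev_proj; reflexivity.
    eapply ev_comp3; try (apply ev_proj; reflexivity). apply Hf. apply ev_mul.
  - rewrite (prodn_ones fac L e).
    + rewrite <- (prodn_rev a L). apply prodn_ext. intros j Hj. unfold fac.
      destruct (Nat.ltb_spec j L); lia.
    + intros j Hj. unfold fac. destruct (Nat.ltb_spec j L); lia.
    + assert (L < 2 ^ L)%nat by (apply Nat.pow_gt_lin_r; lia). lia.
Qed.

Fixpoint prodR (f : nat -> R) (m : nat) : R :=
  match m with O => 1 | S m => prodR f m * f m end.

Lemma prodR_INR f m : INR (prodn f m) = prodR (fun k => INR (f k)) m.
Proof. induction m; simpl. reflexivity. rewrite mult_INR, IHm. reflexivity. Qed.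

Lemma prodR_div f g m : (forall k, g k <> 0) -> prodR f m / prodR g m = prodR (fun k => f k / g k) m.
Proof.
  intros H. induction m; simpl. field. rewrite <- IHm. field. split; auto.
  clear IHm. induction m; simpl. lra. apply Rmult_integral_contrapositive; auto.
Qed.

Lemma prodR_ext f g m : (forall k, (k < m)%nat -> f k = g k) -> prodR f m = prodR g m.
Proof. induction m; intros H; simpl. auto. rewrite IHm, H; auto. Qed.

Lemma prodR_nonneg f m : (forall k, 0 <= f k) -> 0 <= prodR f m.
Proof. intros H; induction m; simpl. lra. apply Rmult_le_pos; auto. Qed.

Lemma prodR_mono f g m : (forall k, 0 <= f k <= g k) -> prodR f m <= prodR g m.
Proof.
  intros H; induction m; simpl. lra.
  apply Rmult_le_compat; auto. apply prodR_nonneg; intros; apply H. apply H. apply H.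
Qed.

Lemma prodR_cv (f : nat -> nat -> R) (l : nat -> R) m :
  (forall k, Un_cv (f k) (l k)) -> Un_cv (fun n => prodR (fun k => f k n) m) (prodR l m).
Proof.
  intros H; induction m; simpl.
  - intros eps He. exists 0%nat. intros. unfold Rdist. rewrite Rminus_diag, Rabs_R0. auto.
  - apply CV_mult; auto.
Qed.

Lemma gen_prodR D s : gen D s = prodR (fun k => D (firstn k s) (nth k s false)) (length s).
Proof. unfold gen. induction (length s); simpl; auto. rewrite IHn. reflexivity. Qed.

Lemma Rmax0_cv u l : Un_cv u l -> 0 <= l -> Un_cv (fun n => Rmax (u n) 0) l.
Proof.
  intros H Hl eps He. destruct (H eps He) as [N HN]. exists N. intros n Hn.
  specialize (HN n Hn). unfold Rdist in *. unfold Rmax. destruct (Rle_dec (u n) 0).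
  - apply Rle_lt_trans with (2 := HN). rewrite !Rabs_left1 by lra. lra.
  - auto.
Qed.

Definition NFc (c : qcode) := CComp mulc [snd (fst c); CComp subc [constc 1; fst (fst c)]].
Definition DFc (c : qcode) := CComp CSucc [snd c].
Definition qprod (c : qcode) : qcode := (CZero, topc (NFc c), CComp predc [topc (DFc c)]).

Lemma prodn_pos f m : (forall k, (0 < f k)%nat) -> (0 < prodn f m)%nat.
Proof. intros H; induction m; simpl. lia. specialize (H m). nia. Qed.

Lemma choice2 {A B C : Type} (P : A -> B -> C -> Prop) :
  (forall a b, exists c, P a b c) -> exists f : A -> B -> C, forall a b, P a b (f a b).
Proof.
  intros H. exists (fun a b => proj1_sig (constructive_indefinite_description _ (H a b))).
  intros a b. exact (proj2_sig (constructive_indefinite_description _ (H a b))).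
Qed.

Lemma wML_ML T : F_wML T -> F_ML T.
Proof.
  intros [HT (D & HD0 & (c & q & Hq & Hmono & Hcv) & HTD)]. split; auto.
  assert (Hch : forall (sx : sit * bool) (n : nat), exists t : nat * nat * nat,
    eval (fst (fst c)) [enc (fst sx); bitn (snd sx); n] (fst (fst t)) /\
    eval (snd (fst c)) [enc (fst sx); bitn (snd sx); n] (snd (fst t)) /\
    eval (snd c) [enc (fst sx); bitn (snd sx); n] (snd t) /\
    q sx n = (if Nat.eqb (fst (fst t)) 0 then 1 else -1) * INR (snd (fst t)) / INR (S (snd t))).
  { intros sx n. destruct (Hq sx n) as (sg & nm & dn & H1 & H2 & H3 & H4).
    exists (sg, nm, dn); simpl; auto. }
  destruct (choice2 _ Hch) as [F HF].
  set (aN := fun s n k => (snd (fst (F (firstn k s, nth k s false) n)) *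
                          (1 - fst (fst (F (firstn k s, nth k s false) n))))%nat).
  set (aD := fun s n k => S (snd (F (firstn k s, nth k s false) n))).
  set (g := fun s n k => Rmax (q (firstn k s, nth k s false) n) 0).
  exists (qprod c), (fun s n => prodR (g s n) (length s)).
  split; [|split].
  - intros s n. exists 0%nat, (prodn (aN s n) (length s)), (Nat.pred (prodn (aD s n) (length s))).
    split; [constructor|split; [|split]].
    + apply ev_top. intros k Hk. destruct (HF (firstn k s, nth k s false) n) as (H1 & H2 & H3 & H4).
      simpl in H1, H2. unfold NFc. eapply ev_comp2. exact H2.
      eapply ev_comp2. apply ev_const. exact H1. apply ev_sub. apply ev_mul.
    + eapply ev_comp1. apply ev_top. intros k Hk.
      destruct (HF (firstn k s, nth k s false) n) as (H1 & H2 & H3 & H4).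
      eapply ev_comp1. exact H3. constructor. apply ev_pred.
    + rewrite Nat.succ_pred_pos by (apply prodn_pos; intros; unfold aD; lia).
      simpl Nat.eqb. rewrite Rmult_1_l, !prodR_INR, prodR_div.
      * apply prodR_ext. intros k Hk. unfold g, aN, aD.
        destruct (HF (firstn k s, nth k s false) n) as (H1 & H2 & H3 & H4). rewrite H4.
        destruct (F (firstn k s, nth k s false) n) as [[sg nm] dn]. cbn [fst snd].
        assert (0 < INR (S dn)) by (apply lt_0_INR; lia).
        assert (0 <= INR nm) by apply pos_INR.
        destruct sg; cbn [Nat.eqb].
        -- replace (1 - 0)%nat with 1%nat by reflexivity. rewrite Nat.mul_1_r, Rmax_left. field. lra. rewrite Rmult_1_l. 
           apply Rmult_le_pos. auto. left; apply Rinv_0_lt_compat; auto.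
        -- replace (1 - S sg)%nat with 0%nat by lia. rewrite Nat.mul_0_r, Rmax_right. rewrite INR_0. field. lra.
           replace (-1 * INR nm / INR (S dn)) with (- (INR nm / INR (S dn))) by (field; lra).
           assert (0 <= INR nm / INR (S dn)) by (apply Rmult_le_pos; auto; left; apply Rinv_0_lt_compat; auto). lra.
      * intros k. apply not_0_INR. unfold aD. lia.
  - intros s n. apply prodR_mono. intros k. unfold g. split. apply Rmax_r.
    apply Rle_max_compat_r. apply Hmono.
  - intros s. rewrite HTD, gen_prodR. apply prodR_cv. intros k. unfold g.
    apply Rmax0_cv. apply (Hcv (firstn k s, nth k s false)). apply HD0.
Qed.

Lemma nat_above (B : R) : exists k : nat, B <= INR k.
Proof.
  destruct (archimed B) as [H1 H2]. exists (Z.to_nat (up B)).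
  rewrite INR_IZR_INZ. destruct (Z_le_gt_dec 0 (up B)).
  - rewrite Z2Nat.id by auto. lra.
  - replace (Z.to_nat (up B)) with 0%nat by lia. simpl.
    assert (IZR (up B) <= 0) by (apply IZR_le; lia). lra.
Qed.

Lemma length_prefix w n : length (prefix w n) = n.
Proof. unfold prefix. rewrite length_map, length_seq. reflexivity. Qed.

Lemma Er_convex p q r f : p <= r <= q -> Er p f <= 0 -> Er q f <= 0 -> Er r f <= 0.
Proof.
  unfold Er. intros Hr Hp Hq.
  destruct (Rle_dec (f false) (f true)).
  - apply Rle_trans with (2 := Hq). nra.
  - apply Rle_trans with (2 := Hp). nra.
Qed.

Lemma selcount_mono sel w n m : (n <= m)%nat -> selcount sel w n <= selcount sel w m.
Proof. induction 1. lra. simpl. destruct (sel (prefix w m)); lra. Qed.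

Lemma selcount_nonneg sel w n : 0 <= selcount sel w n.
Proof. apply (selcount_mono sel w 0 n). lia. Qed.

Lemma inf_sel_diverge sel w :
  (forall N, exists k, (N <= k)%nat /\ sel (prefix w k) = true) ->
  forall M, exists N, forall n, (N <= n)%nat -> selcount sel w n > M.
Proof.
  intros H.
  assert (Hm : forall m : nat, exists n, INR m <= selcount sel w n).
  { induction m. exists 0%nat. simpl. lra.
    destruct IHm as [n Hn]. destruct (H n) as [k [Hk Hs]]. exists (S k).
    rewrite S_INR. simpl. rewrite Hs. pose proof (selcount_mono sel w n k Hk). lra. }
  intros M. destruct (nat_above (M + 1)) as [m Hm']. destruct (Hm m) as [n Hn].
  exists n. intros n' Hn'. pose proof (selcount_mono sel w n n' Hn'). lra.
Qed.

Lemma selsum_const sel (f : sit -> R) w (c : R) v n :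
  (forall k, sel (prefix w k) = true -> b2R (w k) - f (prefix w k) = v) ->
  selsum sel f w n = v * selcount sel w n.
Proof.
  intros H. induction n; simpl. lra. rewrite IHn.
  destruct (sel (prefix w n)) eqn:E. rewrite H by auto. lra. lra.
Qed.

Lemma key_sel p q a b Ss varpi T r :
  0 < a -> b < 1 -> contains_SpqML p q Ss -> sel_random Ss (const_fsys a b) varpi ->
  F_ML T -> supermart (phi_pq varpi p q) T -> p < q -> (r = p \/ r = q) ->
  exists N, forall s, (N <= length s)%nat -> Er r (DeltaF T s) <= 0.
Proof.
  intros Ha Hb HSs Hsr HT Hsm Hpq Hr.
  set (sel := fun s : sit => if excluded_middle_informative
      (exists s', length s' = length s /\ Er r (DeltaF T s') > 0) then true else false).
  assert (Hsel : is_SrF r T sel).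
  { intros s. unfold sel. destruct excluded_middle_informative; split; intros; auto; discriminate. }
  assert (HS : Ss sel) by (eapply HSs; eauto).
  assert (Hsel2 : forall k, sel (prefix varpi k) = true -> varpi k = (if Req_EM_T r p then true else false)).
  { intros k Hk. apply Hsel in Hk. destruct Hk as [s' [Hl He]]. rewrite length_prefix in Hl.
    destruct (varpi k) eqn:E; destruct (Req_EM_T r p); auto; exfalso.
    - assert (r = q) by (destruct Hr; auto; congruence). subst r.
      assert (Er q (DeltaF T s') <= 0). { apply Hsm. unfold in_fs, phi_pq. rewrite Hl, E. simpl; lra. }
      lra.
    - subst r. assert (Er p (DeltaF T s') <= 0). { apply Hsm. unfold in_fs, phi_pq. rewrite Hl, E. simpl; lra. }
      lra. }
  assert (Hfin : exists N, forall k, (N <= k)%nat -> sel (prefix varpi k) = false).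
  { apply Classical_Prop.NNPP. intros Hn.
    assert (Hinf : forall N, exists k, (N <= k)%nat /\ sel (prefix varpi k) = true).
    { intros N. apply Classical_Prop.NNPP. intros Hc. apply Hn. exists N. intros k Hk.
      destruct (sel (prefix varpi k)) eqn:E; auto. exfalso; apply Hc; eauto. }
    pose proof (inf_sel_diverge _ _ Hinf) as Hdiv.
    destruct (Hsr sel HS Hdiv) as [Hlo Hhi].
    destruct (Hdiv 0) as [N0 HN0].
    destruct (Req_EM_T r p).
    - destruct (Hhi (1 - b) ltac:(lra)) as [N1 HN1].
      specialize (HN1 (max N0 N1) ltac:(lia)). specialize (HN0 (max N0 N1) ltac:(lia)).
      rewrite (selsum_const _ _ _ 0 (1 - b)) in HN1.
      + unfold Rdiv in HN1. rewrite Rmult_assoc, Rinv_r, Rmult_1_r in HN1 by lra. lra.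
      + intros k Hk. apply Hsel2 in Hk. destruct (Req_EM_T r p); [|congruence]. rewrite Hk. simpl. lra.
    - destruct (Hlo a ltac:(lra)) as [N1 HN1].
      specialize (HN1 (max N0 N1) ltac:(lia)). specialize (HN0 (max N0 N1) ltac:(lia)).
      rewrite (selsum_const _ _ _ 0 (- a)) in HN1.
      + unfold Rdiv in HN1. rewrite Rmult_assoc, Rinv_r, Rmult_1_r in HN1 by lra. lra.
      + intros k Hk. apply Hsel2 in Hk. destruct (Req_EM_T r p); [congruence|]. rewrite Hk. simpl. lra. }
  destruct Hfin as [N HN]. exists N. intros s Hs.
  apply Rnot_lt_le. intros Hc.
  assert (sel (prefix varpi (length s)) = true).
  { apply Hsel. exists s. rewrite length_prefix. split; auto. }
  rewrite HN in H by lia. discriminate.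
Qed.

Lemma key_all p q a b Ss varpi T :
  0 < a -> b < 1 -> contains_SpqML p q Ss -> sel_random Ss (const_fsys a b) varpi ->
  F_ML T -> supermart (phi_pq varpi p q) T -> p < q ->
  exists N, forall s, (N <= length s)%nat -> forall r, p <= r <= q -> Er r (DeltaF T s) <= 0.
Proof.
  intros. destruct (key_sel p q a b Ss varpi T p) as [N1 K1]; auto.
  destruct (key_sel p q a b Ss varpi T q) as [N2 K2]; auto.
  exists (max N1 N2). intros s Hs r Hr. apply (Er_convex p q); auto.
  apply K1; lia. apply K2; lia.
Qed.

Definition tcK (K : nat) := CComp subc [constc K; CProj 0].
Lemma ev_tcK K e xs : eval (tcK K) (e :: xs) (K - e)%nat.
Proof. eapply ev_comp2. apply ev_const. apply ev_proj; reflexivity. apply ev_sub. Qed.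

Lemma ev_tcK' K e xs v : (K - e)%nat = v -> eval (tcK K) (e :: xs) v.
Proof. intros <-. apply ev_tcK. Qed.

Lemma tc_ge N s : (N <= length s)%nat -> (2 ^ N - enc s)%nat = 0%nat.
Proof. intros. pose proof (enc_bounds s). pose proof (Nat.pow_le_mono_r 2 N (length s) ltac:(lia) H). lia. Qed.
Lemma tc_lt N s : (length s < N)%nat -> exists j, (2 ^ N - enc s)%nat = S j.
Proof. intros. pose proof (enc_bounds s). pose proof (Nat.pow_le_mono_r 2 (S (length s)) N ltac:(lia) H).
  exists (2 ^ N - enc s - 1)%nat. lia. Qed.

Lemma cv_scale u l K : Un_cv u l -> Un_cv (fun n => u n / K) (l / K).
Proof.
  intros H. apply (CV_mult u (fun _ => / K)); auto.
  intros eps He. exists 0%nat. intros. unfold Rdist. rewrite Rminus_diag, Rabs_R0. auto.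
Qed.

Definition trunc (T : rproc) (N k : nat) : rproc :=
  fun s => if (length s <? N)%nat then 1 else T s / INR (S k).

Lemma INRS_pos k : 0 < INR (S k).
Proof. apply lt_0_INR; lia. Qed.

Lemma trunc_test T N k : (1 <= N)%nat -> test_proc T -> test_proc (trunc T N k).
Proof.
  intros HN [H0 H1]. split.
  - intros s. unfold trunc. destruct (length s <? N)%nat. lra.
    apply Rmult_le_pos; auto. left; apply Rinv_0_lt_compat, INRS_pos.
  - unfold trunc. simpl. destruct (Nat.ltb_spec 0 N); [reflexivity|lia].
Qed.

Lemma ML_trunc T N k : (1 <= N)%nat -> F_ML T -> F_ML (trunc T N k).
Proof.
  intros HN [HT (c & q & Hq & Hm & Hc)]. split. apply trunc_test; auto.
  exists (qite 2 (tcK (2 ^ N)) (qscale k c) qone),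
    (fun s n => if (length s <? N)%nat then 1 else q s n / INR (S k)).
  split; [|split].
  - intros s n. destruct (Nat.ltb_spec (length s) N).
    + destruct (tc_lt N s H) as [j Hj]. eapply (qval_iteS _ _ _ [enc s; n]).
      apply ev_tcK'. exact Hj. apply qval_scale. apply Hq. apply qval_one.
    + apply (qval_ite0 _ _ _ [enc s; n]). apply ev_tcK'. apply (tc_ge N s H).
      apply qval_scale. apply Hq.
  - intros s n. destruct (length s <? N)%nat. lra.
    unfold Rdiv. apply Rmult_le_compat_r. left; apply Rinv_0_lt_compat, INRS_pos. apply Hm.
  - intros s. unfold trunc. destruct (length s <? N)%nat.
    intros eps He. exists 0%nat. intros. unfold Rdist. rewrite Rminus_diag, Rabs_R0. auto.
    apply cv_scale, Hc.
Qed.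

Lemma C_trunc T N k : (1 <= N)%nat -> F_C T -> F_C (trunc T N k).
Proof.
  intros HN [HT [Hpos [c Hc]]]. split; [apply trunc_test; auto|split].
  - intros s. unfold trunc. destruct (length s <? N)%nat. lra.
    apply Rdiv_lt_0_compat; auto. apply INRS_pos.
  - exists (qite 1 (tcK (2 ^ N)) (qscale k c) qone). intros s. unfold trunc.
    destruct (Nat.ltb_spec (length s) N).
    + destruct (tc_lt N s H) as [j Hj]. eapply (qval_iteS _ _ _ [enc s]).
      apply ev_tcK'. exact Hj. apply qval_scale. apply Hc. apply qval_one.
    + apply (qval_ite0 _ _ _ [enc s]). apply ev_tcK'. apply (tc_ge N s H).
      apply qval_scale. apply Hc.
Qed.

Lemma C_ML T : F_C T -> F_ML T.
Proof.
  intros [HT [Hpos [c Hc]]]. split; auto.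
  exists (qmap (fun c => CComp c [CProj 0]) c), (fun s _ => T s). split; [|split].
  - intros s n. apply qval_proj, Hc.
  - intros; lra.
  - intros s eps He. exists 0%nat. intros. unfold Rdist. rewrite Rminus_diag, Rabs_R0. auto.
Qed.

Lemma trunc_sm p q T N k : 0 <= p -> q <= 1 -> (1 <= N)%nat ->
  (forall s, length s = N -> T s <= INR (S k)) ->
  (forall s, (N <= length s)%nat -> forall r, p <= r <= q -> Er r (DeltaF T s) <= 0) ->
  supermart (const_fsys p q) (trunc T N k).
Proof.
  intros Hp Hq HN HB Hkey s r Hr. unfold in_fs, const_fsys in Hr; simpl in Hr.
  unfold Er, DeltaF, trunc. rewrite !length_app. simpl length.
  pose proof (INRS_pos k).
  destruct (Nat.ltb_spec (length s + 1) N); destruct (Nat.ltb_spec (length s) N); try lia.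
  - lra.
  - assert (forall x, T (s ++ [x]) / INR (S k) <= 1).
    { intros x. apply Rmult_le_reg_r with (INR (S k)); auto. unfold Rdiv.
      rewrite Rmult_assoc, Rinv_l, Rmult_1_r, Rmult_1_l by lra. apply HB.
      rewrite length_app; simpl; lia. }
    pose proof (H2 true); pose proof (H2 false). nra.
  - pose proof (Hkey s ltac:(lia) r Hr) as E. unfold Er, DeltaF in E.
    replace (r * (T (s ++ [true]) / INR (S k) - T s / INR (S k)) +
      (1 - r) * (T (s ++ [false]) / INR (S k) - T s / INR (S k))) with
      ((r * (T (s ++ [true]) - T s) + (1 - r) * (T (s ++ [false]) - T s)) / INR (S k))
      by (field; lra).
    unfold Rdiv. pose proof (Rinv_0_lt_compat _ H). nra.
Qed.

Lemma trunc_inf T N k w : limsup_inf (fun n => T (prefix w n)) ->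
  limsup_inf (fun n => trunc T N k (prefix w n)).
Proof.
  intros H M N0. destruct (H (M * INR (S k)) (max N0 N)) as [n [Hn HM]].
  exists n. split. lia. unfold trunc. rewrite length_prefix.
  destruct (Nat.ltb_spec n N). lia. pose proof (INRS_pos k).
  apply Rmult_gt_reg_r with (INR (S k)); auto. unfold Rdiv.
  rewrite Rmult_assoc, Rinv_l, Rmult_1_r by lra. auto.
Qed.

Lemma fin_bound (f : sit -> R) N : exists B, forall s, length s = N -> f s <= B.
Proof.
  revert f; induction N; intros f.
  - exists (f nil). intros s Hs. destruct s; [lra|discriminate].
  - destruct (IHN (fun s => f (true :: s))) as [B1 H1].
    destruct (IHN (fun s => f (false :: s))) as [B2 H2].
    exists (Rmax B1 B2). intros [|[|] s] Hs; simpl in Hs; try discriminate.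
    + apply Rle_trans with B1. apply H1; lia. apply Rmax_l.
    + apply Rle_trans with B2. apply H2; lia. apply Rmax_r.
Qed.

Lemma fin_bound_lt (f : sit -> R) N : exists B, forall s, (length s < N)%nat -> f s <= B.
Proof.
  induction N.
  - exists 0. intros; lia.
  - destruct IHN as [B1 H1]. destruct (fin_bound f N) as [B2 H2].
    exists (Rmax B1 B2). intros s Hs. destruct (Nat.eq_dec (length s) N).
    + apply Rle_trans with B2. apply H2; auto. apply Rmax_r.
    + apply Rle_trans with B1. apply H1; lia. apply Rmax_l.
Qed.

Lemma growth_scale tau k : growth tau -> growth (fun n => tau n / INR (S k)).
Proof.
  intros (H0 & (c & q & Hq & Hc) & Hm & Hu). pose proof (INRS_pos k).
  assert (1 <= INR (S k)) by (rewrite S_INR; pose proof (pos_INR k); lra).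
  split; [|split; [|split]].
  - intros n. apply Rmult_le_pos; auto. left; apply Rinv_0_lt_compat; auto.
  - exists (qscale k c), (fun n m => q n m / INR (S k)). split.
    + intros n m. apply qval_scale, Hq.
    + intros d m. specialize (Hc d m).
      replace (tau d / INR (S k) - q d m / INR (S k)) with ((tau d - q d m) / INR (S k)) by (field; lra).
      unfold Rdiv. rewrite Rabs_mult, Rabs_inv, (Rabs_right (INR (S k))) by lra.
      apply Rle_lt_trans with (Rabs (tau d - q d m)); auto.
      rewrite <- (Rmult_1_r (Rabs (tau d - q d m))) at 2. apply Rmult_le_compat_l. apply Rabs_pos.
      rewrite <- Rinv_1. apply Rinv_le_contravar; lra.
  - intros n. unfold Rdiv. apply Rmult_le_compat_r. left; apply Rinv_0_lt_compat; auto. auto.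
  - intros M. destruct (Hu (M * INR (S k))) as [n Hn]. exists n.
    apply Rmult_gt_reg_r with (INR (S k)); auto. unfold Rdiv.
    rewrite Rmult_assoc, Rinv_l, Rmult_1_r by lra. auto.
Qed.

Lemma trunc_ge0 T N k w tau : limsup_ge0 (fun n => T (prefix w n) - tau n) ->
  limsup_ge0 (fun n => trunc T N k (prefix w n) - tau n / INR (S k)).
Proof.
  intros H eps N0 He. pose proof (INRS_pos k).
  destruct (H (eps * INR (S k)) (max N0 N) ltac:(nra)) as [n [Hn HM]].
  exists n. split. lia. unfold trunc. rewrite length_prefix.
  destruct (Nat.ltb_spec n N). lia.
  replace (T (prefix w n) / INR (S k) - tau n / INR (S k)) with ((T (prefix w n) - tau n) / INR (S k)) by (field; lra).
  apply Rmult_gt_reg_r with (INR (S k)); auto. unfold Rdiv.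
  rewrite Rmult_assoc, Rinv_l, Rmult_1_r by lra. lra.
Qed.

Lemma gen_snoc D s x : gen D (s ++ [x]) = gen D s * D s x.
Proof.
  rewrite !gen_prodR, length_app. simpl length. rewrite Nat.add_1_r. simpl prodR.
  f_equal.
  - apply prodR_ext. intros j Hj. rewrite firstn_app.
    replace (j - length s)%nat with 0%nat by lia. rewrite app_nil_r, app_nth1 by auto. reflexivity.
  - rewrite firstn_app, Nat.sub_diag, firstn_all, app_nil_r, app_nth2, Nat.sub_diag by lia.
    reflexivity.
Qed.

Lemma gen_nil D : gen D nil = 1.
Proof. reflexivity. Qed.

Definition Dp (D : mproc) (N k : nat) : mproc :=
  fun s x => if (length s <? N)%nat then D s x / INR (S k) else D s x.

Lemma gen_Dp D N k s : gen (Dp D N k) s = (/ INR (S k)) ^ (min (length s) N) * gen D s.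
Proof.
  induction s as [|x s IH] using rev_ind.
  - rewrite !gen_nil. simpl. lra.
  - rewrite !gen_snoc, IH, length_app. simpl length. unfold Dp.
    destruct (Nat.ltb_spec (length s) N).
    + replace (min (length s + 1) N) with (S (min (length s) N)) by lia. simpl. unfold Rdiv. ring.
    + replace (min (length s + 1) N) with (min (length s) N) by lia. ring.
Qed.

Lemma gen_nonneg D s : (forall s x, 0 <= D s x) -> 0 <= gen D s.
Proof. intros H. rewrite gen_prodR. apply prodR_nonneg. intros; apply H. Qed.

Lemma wML_Dp D N k : (forall s x, 0 <= D s x) ->
  lsc (fun (sx : sit * bool) n =>
           enc (fst sx) :: (if snd sx then 1 else 0)%nat :: n :: nil)
        (fun sx => D (fst sx) (snd sx)) ->
  F_wML (gen (Dp D N k)).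
Proof.
  intros HD0 (c & q & Hq & Hm & Hc). pose proof (INRS_pos k).
  assert (HDp : forall s x, 0 <= Dp D N k s x).
  { intros s x. unfold Dp. destruct (length s <? N)%nat; auto.
    apply Rmult_le_pos; auto. left; apply Rinv_0_lt_compat; auto. }
  split; [split|].
  - intros s. apply gen_nonneg; auto.
  - reflexivity.
  - exists (Dp D N k). split; [auto|split; [|reflexivity]].
    exists (qite 3 (tcK (2 ^ N)) c (qscale k c)),
      (fun sx n => if (length (fst sx) <? N)%nat then q sx n / INR (S k) else q sx n).
    split; [|split].
    + intros [s x] n. simpl fst; simpl snd. destruct (Nat.ltb_spec (length s) N).
      * destruct (tc_lt N s H0) as [j Hj].
        eapply (qval_iteS _ _ _ [enc s; (if x then 1 else 0)%nat; n]).
        apply ev_tcK'. exact Hj. apply (Hq (s, x)). apply qval_scale, (Hq (s, x)).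
      * apply (qval_ite0 _ _ _ [enc s; (if x then 1 else 0)%nat; n]).
        apply ev_tcK'. apply (tc_ge N s H0). apply (Hq (s, x)).
    + intros [s x] n. simpl fst. destruct (Nat.ltb (length s) N); [|apply Hm].
      unfold Rdiv. apply Rmult_le_compat_r. left; apply Rinv_0_lt_compat; auto. apply Hm.
    + intros [s x]. unfold Dp; simpl fst; simpl snd. destruct (length s <? N)%nat.
      apply cv_scale, (Hc (s, x)). apply (Hc (s, x)).
Qed.

Lemma Dp_sm p q D N k : 0 <= p -> q <= 1 ->
  (forall s x, 0 <= D s x) ->
  (forall s x, (length s < N)%nat -> D s x <= INR (S k)) ->
  (forall s, (N <= length s)%nat -> forall r, p <= r <= q -> Er r (DeltaF (gen D) s) <= 0) ->
  supermart (const_fsys p q) (gen (Dp D N k)).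
Proof.
  intros Hp Hq HD0 HB Hkey s r Hr. unfold in_fs, const_fsys in Hr; simpl in Hr.
  pose proof (INRS_pos k).
  destruct (Nat.ltb_spec (length s) N).
  - assert (Ex : forall x, gen (Dp D N k) (s ++ [x]) = gen (Dp D N k) s * (D s x / INR (S k))).
    { intros x. rewrite gen_snoc. unfold Dp at 2. rewrite (proj2 (Nat.ltb_lt _ _) H0). reflexivity. }
    unfold Er, DeltaF. rewrite !Ex.
    assert (forall x, D s x / INR (S k) <= 1).
    { intros x. apply Rmult_le_reg_r with (INR (S k)); auto. unfold Rdiv.
      rewrite Rmult_assoc, Rinv_l, Rmult_1_r, Rmult_1_l by lra. apply HB; auto. }
    pose proof (H1 true); pose proof (H1 false).
    assert (0 <= gen (Dp D N k) s).
    { apply gen_nonneg. intros s' x. unfold Dp. destruct (length s' <? N)%nat; auto.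
      apply Rmult_le_pos; auto. left; apply Rinv_0_lt_compat; auto. }
    replace (r * (gen (Dp D N k) s * (D s true / INR (S k)) - gen (Dp D N k) s) +
      (1 - r) * (gen (Dp D N k) s * (D s false / INR (S k)) - gen (Dp D N k) s))
      with (gen (Dp D N k) s * (r * (D s true / INR (S k) - 1) + (1 - r) * (D s false / INR (S k) - 1))) by ring.
    assert (r * (D s true / INR (S k) - 1) + (1 - r) * (D s false / INR (S k) - 1) <= 0) by nra.
    nra.
  - pose proof (Hkey s H0 r Hr) as E. unfold Er, DeltaF in *.
    rewrite !gen_Dp, !length_app. simpl length.
    replace (min (length s + 1) N) with N by lia. replace (min (length s) N) with N by lia.
    assert (0 < (/ INR (S k)) ^ N) by (apply pow_lt, Rinv_0_lt_compat; auto).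
    replace (r * ((/ INR (S k)) ^ N * gen D (s ++ [true]) - (/ INR (S k)) ^ N * gen D s) +
      (1 - r) * ((/ INR (S k)) ^ N * gen D (s ++ [false]) - (/ INR (S k)) ^ N * gen D s))
      with ((/ INR (S k)) ^ N * (r * (gen D (s ++ [true]) - gen D s) + (1 - r) * (gen D (s ++ [false]) - gen D s))) by ring.
    nra.
Qed.

Lemma Dp_inf D N k w : limsup_inf (fun n => gen D (prefix w n)) ->
  limsup_inf (fun n => gen (Dp D N k) (prefix w n)).
Proof.
  intros H M N0. pose proof (INRS_pos k).
  assert (Hc : 0 < (/ INR (S k)) ^ N) by (apply pow_lt, Rinv_0_lt_compat; auto).
  destruct (H (M / (/ INR (S k)) ^ N) (max N0 N)) as [n [Hn HM]].
  exists n. split. lia. rewrite gen_Dp, length_prefix. replace (min n N) with N by lia.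
  apply Rmult_gt_reg_r with (/ (/ INR (S k)) ^ N). apply Rinv_0_lt_compat; auto.
  rewrite Rmult_comm, <- Rmult_assoc, Rinv_l, Rmult_1_l by lra. exact HM.
Qed.

Lemma sm_const_phi p q varpi T : p < q -> supermart (const_fsys p q) T -> supermart (phi_pq varpi p q) T.
Proof.
  intros Hpq H s r Hr. apply H. unfold in_fs, phi_pq, const_fsys in *. simpl.
  destruct (varpi (length s)); simpl in Hr; lra.
Qed.

Lemma bound_k (B : R) : exists k : nat, B <= INR (S k).
Proof. destruct (nat_above B) as [k Hk]. exists k. rewrite S_INR. lra. Qed.

Theorem corollary32 (p q a b : R) (Ss : selproc -> Prop) (varpi : path) :
  0 <= p -> p < q -> q <= 1 ->
  0 < a -> a <= b -> b < 1 ->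
  countable_set Ss ->
  contains_SpqML p q Ss ->
  sel_random Ss (const_fsys a b) varpi ->
  forall (Rn : rnotion) (w : path),
    random Rn (phi_pq varpi p q) w <-> random Rn (const_fsys p q) w.
Proof.
  intros Hp Hpq Hq Ha Hab Hb _ HSs Hsr Rn w. split.
  - destruct Rn; simpl; unfold ML_like_random.
    + intros H [T [HT [[Ht Hsm] Hi]]]. apply H. exists T. split; [auto|split; [split; [auto|apply sm_const_phi; auto]|auto]].
    + intros H [T [HT [[Ht Hsm] Hi]]]. apply H. exists T. split; [auto|split; [split; [auto|apply sm_const_phi; auto]|auto]].
    + intros H [T [HT [[Ht Hsm] Hi]]]. apply H. exists T. split; [auto|split; [split; [auto|apply sm_const_phi; auto]|auto]].
    + intros H [T [tau [HT [[Ht Hsm] [Hg Hi]]]]]. apply H. exists T, tau. split; [auto|split; [split; [auto|apply sm_const_phi; auto]|auto]].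
  - destruct Rn; simpl; unfold ML_like_random.
    + intros H [T [HT [[Ht Hsm] Hi]]]. apply H.
      destruct (key_all p q a b Ss varpi T) as [N HN]; auto.
      destruct (fin_bound T (S N)) as [B HB]. destruct (bound_k B) as [k Hk].
      exists (trunc T (S N) k). split; [apply ML_trunc; auto; lia|split; [split|]].
      * apply trunc_test; auto; lia.
      * apply trunc_sm; auto. lia. intros; eapply Rle_trans; eauto.
        intros s Hs' r Hr. apply HN; auto; lia.
      * apply trunc_inf; auto.
    + intros H [T [HT [[Ht Hsm] Hi]]]. apply H.
      pose proof (wML_ML T HT) as HML.
      destruct (key_all p q a b Ss varpi T) as [N HN]; auto.
      destruct HT as [_ (D & HD0 & Hlsc & HTD)].
      destruct (fin_bound_lt (fun s => Rmax (D s true) (D s false)) N) as [B HB].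
      destruct (bound_k B) as [k Hk].
      exists (gen (Dp D N k)). split; [apply wML_Dp; auto|split; [split|]].
      * split. intros s; apply gen_nonneg. intros s0 x. unfold Dp. destruct (length s0 <? N)%nat; auto.
        apply Rmult_le_pos; auto. left; apply Rinv_0_lt_compat, INRS_pos. reflexivity.
      * apply Dp_sm; auto.
        -- intros s x Hl. specialize (HB s Hl). simpl in HB. destruct x.
           pose proof (Rmax_l (D s true) (D s false)); lra.
           pose proof (Rmax_r (D s true) (D s false)); lra.
        -- intros s Hl r Hr. specialize (HN s Hl r Hr). unfold Er, DeltaF in *. rewrite !HTD in HN. exact HN.
      * apply Dp_inf. intros M N0. destruct (Hi M N0) as [n Hn]. exists n. rewrite <- HTD. auto.
    + intros H [T [HT [[Ht Hsm] Hi]]]. apply H.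
      destruct (key_all p q a b Ss varpi T) as [N HN]; auto. apply C_ML; auto.
      destruct (fin_bound T (S N)) as [B HB]. destruct (bound_k B) as [k Hk].
      exists (trunc T (S N) k). split; [apply C_trunc; auto; lia|split; [split|]].
      * apply trunc_test; auto; lia.
      * apply trunc_sm; auto. lia. intros; eapply Rle_trans; eauto.
        intros s Hs' r Hr. apply HN; auto; lia.
      * apply trunc_inf; auto.
    + intros H [T [tau [HT [[Ht Hsm] [Hg Hi]]]]]. apply H.
      destruct (key_all p q a b Ss varpi T) as [N HN]; auto. apply C_ML; auto.
      destruct (fin_bound T (S N)) as [B HB]. destruct (bound_k B) as [k Hk].
      exists (trunc T (S N) k), (fun n => tau n / INR (S k)).
      split; [apply C_trunc; auto; lia|split; [split|split]].
      * apply trunc_test; auto; lia.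
      * apply trunc_sm; auto. lia. intros; eapply Rle_trans; eauto.
        intros s Hs' r Hr. apply HN; auto; lia.
      * apply growth_scale; auto.
      * apply trunc_ge0; auto.
Qed.
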